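(* Let $\mathfrak{A}=(Q,\Sigma,Q_0,\Delta,F)$ be a non-confluent Büchi automaton with $n=|Q|$ states and let $\mathcal{O}=\{(F_1,b_1),\ldots,(F_k,b_k)\}\subseteq 2^Q\times\mathbb{N}_+$. There exists a deterministic parity automaton $\mathfrak{P}$ over $\Sigma$ such that (1) $\mathfrak{P}$ accepts $w$ if and only if $\mathfrak{A}$ has an accepting run $\rho$ on $w$ such that for every $j\in\{1,\ldots,k\}$ every infix of $\rho$ of length $b_j$ contains at least one state from $F_j$; and (2) $|\mathfrak{P}|\le 2^{(n+1)^2}\cdot\left(\prod_{j=1}^k(b_j+1)\right)^{n}$ and $\mathfrak{P}$ uses at most $2n+1$ priorities.
   Context: A Büchi automaton $(Q,\Sigma,Q_0,\Delta,F)$ has finite state set $Q$, initial states $Q_0$, transitions $\Delta\subseteq Q\times\Sigma\times Q$, and accepts runs $q_0q_1\cdots$ ($q_0\in Q_0$, $(q_m,w_m,q_{m+1})\in\Delta$) visiting $F$ infinitely often. It is non-confluent if for every word $w$ and any two runs $q_0q_1\cdots$ and $q_0'q_1'\cdots$ on $w$, $q_m=q_m'$ implies $q_{m'}=q_{m'}'$ for all $m'<m$. A deterministic parity automaton $(Q',\Sigma,q_0',\delta,c)$ has transition function $\delta\colon Q'\times\Sigma\to Q'$ and priority function $c\colon Q'\to\mathbb{N}$, and accepts a word iff the minimal priority seen infinitely often on its run is even; its size is $|Q'|$ and its number of priorities is $|c(Q')|$. *)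

(* Defs.v *)
From mathcomp Require Import all_boot.
Set Implicit Arguments. Unset Strict Implicit. Unset Printing Implicit Defensive.

Definition word (Sigma : Type) := nat -> Sigma.

Definition is_run (Sigma Q : finType) (Q0 : {set Q}) (Delta : {set Q * Sigma * Q})
    (w : word Sigma) (r : nat -> Q) : Prop :=
  r 0 \in Q0 /\ forall m, (r m, w m, r m.+1) \in Delta.

Definition buchi_accepting (Q : finType) (F : {set Q}) (r : nat -> Q) : Prop :=
  forall N, exists m, N <= m /\ r m \in F.

Definition non_confluent (Sigma Q : finType) (Q0 : {set Q})
    (Delta : {set Q * Sigma * Q}) : Prop :=
  forall (w : word Sigma) (r r' : nat -> Q),
    is_run Q0 Delta w r -> is_run Q0 Delta w r' ->
    forall m, r m = r' m -> forall m', m' < m -> r m' = r' m'.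

Definition infixes_hit (Q : finType) (G : {set Q}) (b : nat) (r : nat -> Q) : Prop :=
  forall i, exists t, i <= t < i + b /\ r t \in G.

Record DPA (Sigma : finType) := {
  dQ : finType;
  dq0 : dQ;
  ddelta : dQ -> Sigma -> dQ;
  dprio : dQ -> nat
}.

Fixpoint dpa_run (Sigma : finType) (P : DPA Sigma) (w : word Sigma) (m : nat) : @dQ Sigma P :=
  match m with
  | 0 => @dq0 Sigma P
  | m'.+1 => @ddelta Sigma P (dpa_run P w m') (w m')
  end.

Definition dpa_accepts (Sigma : finType) (P : DPA Sigma) (w : word Sigma) : Prop :=
  exists p, ~~ odd p /\
    (forall N, exists m, N <= m /\ @dprio Sigma P (dpa_run P w m) = p) /\
    (exists N, forall m, N <= m -> p <= @dprio Sigma P (dpa_run P w m)).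

Definition dpa_size (Sigma : finType) (P : DPA Sigma) : nat := #|@dQ Sigma P|.
Definition dpa_num_priorities (Sigma : finType) (P : DPA Sigma) : nat :=
  size (undup [seq @dprio Sigma P q | q : @dQ Sigma P]).

(* Main.v *)
Require Import Defs.
From mathcomp Require Import all_boot.
From mathcomp Require Import zify.
From Stdlib Require Import Lia.
Set Implicit Arguments. Unset Strict Implicit. Unset Printing Implicit Defensive.

Section FiltIota.
Variable P : pred nat.

Lemma filt_split N h : h <= N ->
  [seq x <- iota 0 N | P x] = [seq x <- iota 0 h | P x] ++ [seq x <- iota h (N - h) | P x].
Proof. by move=> hN; rewrite -filter_cat -{1}(subnKC hN) iotaD. Qed.

Lemma iota_S h N : h < N -> iota h (N - h) = h :: iota h.+1 (N - h.+1).
Proof. by move=> hN; rewrite -(subnSK hN). Qed.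

Lemma nth_pos N h : h < N -> P h ->
  nth 0 [seq x <- iota 0 N | P x] (count P (iota 0 h)) = h.
Proof.
move=> hN Ph; rewrite (filt_split (ltnW hN)) nth_cat size_filter ltnn subnn.
by rewrite iota_S //= Ph.
Qed.

Lemma pos_le h h' : h <= h' -> count P (iota 0 h) <= count P (iota 0 h').
Proof. by move=> hh; rewrite -(subnKC hh) iotaD count_cat leq_addr. Qed.

Lemma pos_lt h h' : h < h' -> P h -> count P (iota 0 h) < count P (iota 0 h').
Proof.
move=> hh Ph; rewrite -(subnKC (ltnW hh)) iotaD count_cat add0n iota_S //= Ph; lia.
Qed.

Lemma pos_surj N q : q < size [seq x <- iota 0 N | P x] ->
  let h := nth 0 [seq x <- iota 0 N | P x] q in
  [/\ P h, h < N & count P (iota 0 h) = q].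
Proof.
move=> qs h.
have hin : h \in [seq x <- iota 0 N | P x] by apply: mem_nth.
move: (hin); rewrite mem_filter mem_iota add0n => /andP[Ph hN]; split => //.
have uq : uniq [seq x <- iota 0 N | P x] by apply/filter_uniq/iota_uniq.
have cs : count P (iota 0 h) < size [seq x <- iota 0 N | P x].
  by rewrite size_filter; apply: pos_lt.
apply/eqP; rewrite -(nth_uniq 0 cs qs uq) nth_pos //.
Qed.

Lemma pos_id h : (forall x, x < h -> P x) -> count P (iota 0 h) = h.
Proof.
move=> H; rewrite -{2}(size_iota 0 h); apply/eqP; rewrite -all_count.
by apply/allP => x; rewrite mem_iota add0n => /H.
Qed.

Lemma pos_leh h : count P (iota 0 h) <= h.
Proof. by rewrite -{2}(size_iota 0 h) count_size. Qed.
End FiltIota.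

Section Safra.
Variable Q : finType.
Implicit Types (L : seq {set Q}) (X Y : {set Q}).

Definition nd L i := nth set0 L i.
Definition own L i := nd L i :\: \bigcup_(j < size L | i < j) nd L j.
Definition lam X Y := (Y \subset X) || [disjoint Y & X].
Definition Inv L := [/\ forall i, i < size L -> nd L i != set0,
   pairwise lam L,
   forall i, i < size L -> own L i != set0 &
   forall i, i < size L -> nd L i \subset nd L 0].
Lemma disjointP X Y : reflect (forall x, x \in X -> x \in Y -> False) [disjoint X & Y].
Proof.
rewrite -setI_eq0; apply: (iffP eqP) => [H x a b|H].
  have : x \in X :&: Y by rewrite inE a b.
  by rewrite H inE.
by apply/setP => x; rewrite !inE; apply/negP => /andP[a b]; apply: (H x a b).
Qed.

Definition cover L := \bigcup_(i < size L) nd L i.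

Lemma coverP L x : reflect (exists2 i, i < size L & x \in nd L i) (x \in cover L).
Proof.
apply: (iffP bigcupP) => [[i _ xi]|[i ilt xi]]; first by exists i.
by exists (Ordinal ilt).
Qed.

Lemma lamP L i j : pairwise lam L -> i < j -> j < size L -> lam (nd L i) (nd L j).
Proof. move=> /(pairwiseP set0) H ij js; apply: H => //; rewrite inE /=; lia. Qed.

Lemma pairwise_nd L (r : rel {set Q}) :
  (forall i j, i < j -> j < size L -> r (nd L i) (nd L j)) -> pairwise r L.
Proof. move=> H; apply/(pairwiseP set0) => i j; rewrite !inE /= => _ js ij; exact: H. Qed.

Lemma own_sub L i : own L i \subset nd L i.
Proof. exact: subsetDl. Qed.

Lemma own_disj L i j x : i < j -> j < size L -> x \in own L i -> x \in nd L j -> False.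
Proof.
move=> ij js; rewrite inE => /andP[/negP nb _] xj; apply: nb.
by apply/bigcupP; exists (Ordinal js).
Qed.

Lemma size_Inv L : Inv L -> size L <= #|Q|.
Proof.
case=> _ _ Hown _.
case: L Hown => [//|X L'] Hown.
have [x0 _] : exists x, x \in own (X :: L') 0 by apply/set0Pn; apply: Hown.
set L := X :: L' in Hown *.
pose g (i : 'I_(size L)) := odflt x0 [pick x in own L i].
have gP (i : 'I_(size L)) : g i \in own L i.
  rewrite /g; case: pickP => [x -> //|H0].
  by move: (Hown i (ltn_ord i)) => /set0Pn[x]; rewrite H0.
have gne (i j : 'I_(size L)) : i < j -> g i != g j.
  move=> ij; apply/eqP => e; apply: (own_disj ij (ltn_ord j) (gP i)).
  by rewrite e; apply: (subsetP (own_sub _ _)); apply: gP.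
have ginj : injective g.
  move=> i j gij; apply/val_inj/eqP; case: (ltngtP i j) => // ij.
  - by move: (gne _ _ ij); rewrite gij eqxx.
  - by move: (gne _ _ ij); rewrite gij eqxx.
by have := leq_card g ginj; rewrite card_ord.
Qed.

Variable F : {set Q}.

Definition img (S : {set Q}) (p : Q -> Q) X := [set y in S | p y \in X].
Definition spawn L := [seq own L h :&: F | h <- iota 0 (size L)].
Definition ext L := L ++ spawn L.
Definition noOwn L h := own L h == set0.
Definition gr L h := (nd L h != set0) && noOwn L h &&
   ~~ [exists h' : 'I_h, noOwn L h' && (nd L h \subset nd L h')].
Definition rem L h := (nd L h == set0) ||
   [exists h' : 'I_h, gr L h' && (nd L h \subset nd L h')].
Definition kp L h := ~~ rem L h.
Definition pos L h := count (kp L) (iota 0 h).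
Definition next L := [seq nd L h | h <- iota 0 (size L) & kp L h].

Lemma size_ext L : size (ext L) = size L + size L.
Proof. by rewrite size_cat size_map size_iota. Qed.

Lemma nd_ext_old L i : i < size L -> nd (ext L) i = nd L i.
Proof. by move=> il; rewrite /nd nth_cat il. Qed.

Lemma nd_ext_new L i : i < size L -> nd (ext L) (size L + i) = own L i :&: F.
Proof.
move=> il; rewrite /nd nth_cat ltnNge leq_addr /= addKn.
by rewrite (nth_map 0) ?size_iota // nth_iota.
Qed.

Lemma nd_map f L i : i < size L -> nd (map f L) i = f (nd L i).
Proof. by move=> il; rewrite /nd (nth_map set0). Qed.

Lemma img_mono S p X Y : X \subset Y -> img S p X \subset img S p Y.
Proof. by move=> /subsetP H; apply/subsetP => y; rewrite !inE => /andP[-> /H]. Qed.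

Lemma img_disj S p X Y : [disjoint X & Y] -> [disjoint img S p X & img S p Y].
Proof.
move=> /disjointP H; apply/disjointP => y; rewrite !inE => /andP[_ a] /andP[_ b].
exact: H a b.
Qed.

Lemma lam_img S p X Y : lam X Y -> lam (img S p X) (img S p Y).
Proof.
by case/orP => H; apply/orP; [left; apply: img_mono|right; apply: img_disj].
Qed.

Lemma pairwise_map_img S p L : pairwise lam L -> pairwise lam (map (img S p) L).
Proof. by rewrite pairwise_map; apply: sub_pairwise => X Y /= ; apply: lam_img. Qed.

Lemma pairwise_ext L : pairwise lam L -> pairwise lam (ext L).
Proof.
move=> pL; apply: pairwise_nd => a b ab; rewrite size_ext => bs.
have sp h : h < size L -> own L h :&: F \subset nd L h.
  move=> _; apply: subset_trans (own_sub L h); exact: subsetIl.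
case: (ltnP b (size L)) => bL.
  by rewrite !nd_ext_old //; [apply: lamP|lia].
have -> : b = size L + (b - size L) by lia.
rewrite nd_ext_new; last by lia.
set h := b - size L.
case: (ltnP a (size L)) => aL.
  rewrite nd_ext_old //.
  case: (ltngtP a h) => ah.
  - have := lamP pL ah (_ : h < size L); case/(_ _)/orP; first by lia.
      by move=> H; apply/orP; left; apply: subset_trans H; apply: sp; lia.
    move=> H; apply/orP; right.
    by apply: disjointWl H; apply: sp; lia.
  - apply/orP; right; apply/disjointP => x /setIP[xo _] xa.
    by apply: (own_disj ah aL xo xa).
  - by apply/orP; left; rewrite -ah; apply: sp; lia.
have -> : a = size L + (a - size L) by lia.
rewrite nd_ext_new; last by lia.
apply/orP; right; apply/disjointP => x /setIP[xo _] /setIP[xo' _].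
apply: (own_disj (_ : a - size L < h) (_ : h < size L) xo' (subsetP (own_sub _ _) _ xo)); lia.
Qed.



Lemma size_next L : size (next L) = count (kp L) (iota 0 (size L)).
Proof. by rewrite size_map size_filter. Qed.

Lemma next_nd L h : h < size L -> kp L h -> nd (next L) (pos L h) = nd L h.
Proof.
move=> hs kh; rewrite /nd /next (nth_map 0); last by rewrite size_filter; apply: pos_lt.
by rewrite nth_pos.
Qed.

Lemma pos_lt_size L h : h < size L -> kp L h -> pos L h < size (next L).
Proof. by move=> hs kh; rewrite size_next; apply: pos_lt. Qed.

Lemma next_surj L q : q < size (next L) ->
  exists h, [/\ h < size L, kp L h, pos L h = q & nd (next L) q = nd L h].
Proof.
move=> qs; move: (qs); rewrite size_map => qs'.
have [Ph hN ph] := pos_surj qs'.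
exists (nth 0 [seq x <- iota 0 (size L) | kp L x] q); split => //.
by rewrite /nd /next (nth_map 0).
Qed.

Lemma gr_kp L h : gr L h -> kp L h.
Proof.
case/andP => /andP[ne no] nex; rewrite /kp /rem negb_or ne /=.
apply/existsP => -[h' /andP[g sub]]; move/existsP: nex; apply.
by exists h'; rewrite sub andbT; case/andP: g => /andP[].
Qed.

Lemma kp_noOwn_gr L h : kp L h -> noOwn L h -> gr L h.
Proof.
rewrite /kp /rem negb_or => /andP[ne nex] no.
rewrite /gr ne no /=; apply/negP => /existsP[h0 /andP[no0 sub0]].
pose P := fun h' => (h' < h) && noOwn L h' && (nd L h \subset nd L h').
have exP : exists h', P h' by exists h0; rewrite /P ltn_ord no0 sub0.
case: (ex_minnP exP) => m /andP[/andP[mh nom] subm] minm.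
move/existsP: nex; apply; exists (Ordinal mh) => /=; rewrite subm andbT.
rewrite /gr nom andbT; apply/andP; split.
  apply/set0Pn; move/set0Pn: ne => [x xh]; exists x; exact: (subsetP subm).
apply/negP => /existsP[h'' /andP[no'' sub'']].
have := ltn_ord h''.
have : m <= h'' by apply: minm; rewrite /P no'' (subset_trans subm sub'') andbT; have := ltn_ord h''; lia.
lia.
Qed.

Lemma gr_disj L h h' : pairwise lam L -> gr L h -> h < h' -> h' < size L -> kp L h' ->
  [disjoint nd L h' & nd L h].
Proof.
move=> pL g hh' hs kh; case/orP: (lamP pL hh' hs) => // sub.
move: kh; rewrite /kp /rem negb_or => /andP[_ /existsP nex]; exfalso; apply: nex.
by exists (Ordinal hh'); rewrite g sub.
Qed.

Lemma own_next L q : pairwise lam L -> q < size (next L) -> own (next L) q != set0.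
Proof.
move=> pL qs; have [h [hs kh phq ndq]] := next_surj qs.
pose A := if noOwn L h then nd L h else own L h.
have Ane : A != set0.
  rewrite /A; case: ifP => no; last by rewrite /noOwn in no; rewrite no.
  by move: kh; rewrite /kp /rem negb_or => /andP[].
have Asub : A \subset nd L h by rewrite /A; case: ifP => _ //; apply: own_sub.
case/set0Pn: Ane => x xA; apply/set0Pn; exists x; rewrite inE; apply/andP; split; last first.
  by rewrite ndq; apply: (subsetP Asub).
apply/negP => /bigcupP[j qj xj].
have [h' [hs' kh' ph' ndj]] := next_surj (ltn_ord j).
have hh' : h < h'.
  rewrite ltnNge; apply/negP => le; have := pos_le (kp L) le.
  move: phq ph' qj. rewrite /pos. move=> ->. move=> ->. lia.
rewrite ndj in xj; move: xA; rewrite /A; case: ifP => no xA.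
  have g := kp_noOwn_gr kh no.
  by move/disjointP: (gr_disj pL g hh' hs' kh') => H; exact: (H x xj xA).
exact: (own_disj hh' hs' xA xj).
Qed.

End Safra.

Section Step.
Variable Q : finType.
Variable F : {set Q}.
Implicit Types (L : seq {set Q}) (X Y : {set Q}).

Definition stepL (S : {set Q}) (p : Q -> Q) L := next (ext F (map (img S p) L)).

Lemma pairwise_next L : pairwise (@lam Q) L -> pairwise (@lam Q) (next L).
Proof.
move=> pL; rewrite /next pairwise_map; apply: pairwise_filter.
apply/(pairwiseP 0) => a b; rewrite !inE /= size_iota => a_lt b_lt ab.
rewrite !nth_iota // !add0n /=; exact: lamP.
Qed.

Lemma kp0 L : 0 < size L -> nd L 0 != set0 -> kp L 0.
Proof.
move=> _ ne; rewrite /kp /rem negb_or ne /=.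
by apply/negP => /existsP[[]].
Qed.

Lemma head_next L : (forall h, h < size L -> nd L h \subset nd L 0) ->
  forall q, q < size (next L) -> nd (next L) q \subset nd (next L) 0.
Proof.
move=> H q qs; have [h [hs kh _ ->]] := next_surj qs.
have L0 : 0 < size L by lia.
have ne0 : nd L 0 != set0.
  move: kh; rewrite /kp /rem negb_or => /andP[/set0Pn[x xh] _].
  by apply/set0Pn; exists x; apply: (subsetP (H h hs)).
have := next_nd L0 (kp0 L0 ne0); rewrite /pos /= => ->.
exact: H.
Qed.

Lemma cover_next L : cover (next L) = cover L.
Proof.
apply/setP => x; apply/idP/idP.
  move/coverP => [q qs xq]; have [h [hs _ _ e]] := next_surj qs.
  by apply/coverP; exists h; rewrite // -e.
move/coverP => [h hs xh].
case kh : (kp L h).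
  by apply/coverP; exists (pos L h); [apply: pos_lt_size|rewrite next_nd].
move/negbFE: kh; rewrite /rem => /orP[/eqP e|/existsP[h' /andP[g sub]]].
  by move: xh; rewrite e inE.
have h's : h' < size L by have := ltn_ord h'; lia.
apply/coverP; exists (pos L h'); first by apply: pos_lt_size; [|apply: gr_kp].
by rewrite next_nd; [apply: (subsetP sub)| |apply: gr_kp].
Qed.

Lemma cover_ext L : cover (ext F L) = cover L.
Proof.
apply/setP => x; apply/idP/idP; move/coverP => [h hs xh]; apply/coverP.
  move: hs; rewrite size_ext => hs.
  case: (ltnP h (size L)) => hL; first by exists h; rewrite // -(nd_ext_old F).
  exists (h - size L); first by lia.
  rewrite (_ : h = size L + (h - size L)) in xh; last by lia.
  rewrite (nd_ext_new F) in xh; last by lia.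
  by case/setIP: xh => /(subsetP (own_sub _ _)).
by exists h; [rewrite size_ext; lia| rewrite (nd_ext_old F)].
Qed.

Lemma cover_step (S : {set Q}) (p : Q -> Q) L : (forall y, y \in S -> p y \in cover L) ->
  cover (stepL S p L) = S.
Proof.
move=> H; rewrite /stepL cover_next cover_ext; apply/setP => y; apply/idP/idP.
  move/coverP => [i]; rewrite size_map => il; rewrite nd_map // inE => /andP[] //.
move=> yS; have /coverP[i il pi] := H y yS.
by apply/coverP; exists i; [rewrite size_map | rewrite nd_map // inE yS].
Qed.

Lemma Inv_step (S : {set Q}) (p : Q -> Q) L : Inv L -> Inv (stepL S p L).
Proof.
case=> ne pL own0 hd.
set L1 := map (img S p) L; set L2 := ext F L1.
have pL2 : pairwise (@lam Q) L2 by apply/pairwise_ext/pairwise_map_img.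
have hd2 : forall h, h < size L2 -> nd L2 h \subset nd L2 0.
  move=> h; rewrite size_ext size_map => hs.
  have L0 : 0 < size L by lia.
  have e0 : nd L2 0 = img S p (nd L 0) by rewrite (nd_ext_old F) ?size_map // nd_map.
  rewrite e0; case: (ltnP h (size L)) => hL.
    by rewrite (nd_ext_old F) ?size_map // nd_map //; apply/img_mono/hd.
  have -> : h = size L1 + (h - size L1) by rewrite size_map; lia.
  rewrite (nd_ext_new F); last by rewrite size_map; lia.
  apply: subset_trans (subsetIl _ _) _; apply: subset_trans (own_sub _ _) _.
  rewrite nd_map; last by rewrite /L1 size_map; lia.
  by apply/img_mono/hd; rewrite /L1 size_map; lia.
split.
- move=> q qs; have [h [hs kh _ ->]] := next_surj qs.
  by move: kh; rewrite /kp /rem negb_or => /andP[].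
- exact: pairwise_next.
- by move=> q qs; apply: own_next.
- exact: head_next.
Qed.

End Step.

Section Prio.
Variable Q : finType.
Implicit Types (L : seq {set Q}).

Definition events L L2 :=
  [seq (2 * h).+1 | h <- iota 0 (size L) & nd L2 h == set0] ++
  [seq (2 * h).+2 | h <- iota 0 (size L) & gr L2 h].
Definition prio (cap : nat) L L2 := foldr minn cap (events L L2).

Lemma foldr_min_le cap s e : e \in s -> foldr minn cap s <= e.
Proof.
elim: s => //= a s IH; rewrite inE => /orP[/eqP->|/IH]; first exact: geq_minl.
by move=> H; apply: leq_trans H; apply: geq_minr.
Qed.

Lemma foldr_min_cap cap s : foldr minn cap s <= cap.
Proof. elim: s => //= a s IH; apply: leq_trans IH; exact: geq_minr. Qed.

Lemma foldr_min_in cap s : foldr minn cap s = cap \/ foldr minn cap s \in s.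
Proof.
elim: s => [|a s IH] /=; first by left.
rewrite /minn; case: ifP => _; first by right; rewrite inE eqxx.
by case: IH => [->|H]; [left|right; rewrite inE H orbT].
Qed.

Lemma prio_le cap L L2 e : e \in events L L2 -> prio cap L L2 <= e.
Proof. exact: foldr_min_le. Qed.

Lemma prio_cap cap L L2 : prio cap L L2 <= cap.
Proof. exact: foldr_min_cap. Qed.

Lemma prio_in cap L L2 : prio cap L L2 = cap \/ prio cap L L2 \in events L L2.
Proof. exact: foldr_min_in. Qed.

Lemma red_ev L L2 h : h < size L -> nd L2 h == set0 -> (2 * h).+1 \in events L L2.
Proof.
move=> hs e; rewrite mem_cat; apply/orP; left; apply/mapP; exists h => //.
by rewrite mem_filter e mem_iota.
Qed.

Lemma gr_ev L L2 h : h < size L -> gr L2 h -> (2 * h).+2 \in events L L2.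
Proof.
move=> hs e; rewrite mem_cat; apply/orP; right; apply/mapP; exists h => //.
by rewrite mem_filter e mem_iota.
Qed.

Lemma ev_inv L L2 e : e \in events L L2 ->
  (exists h, [/\ h < size L, e = (2 * h).+1 & nd L2 h == set0]) \/
  (exists h, [/\ h < size L, e = (2 * h).+2 & gr L2 h]).
Proof.
rewrite mem_cat => /orP[/mapP[h]|/mapP[h]]; rewrite mem_filter mem_iota add0n => /andP[a b] ->.
  by left; exists h.
by right; exists h.
Qed.
End Prio.

From Stdlib Require Import Classical ClassicalEpsilon.

Definition pb (P : Prop) : bool := if excluded_middle_informative P then true else false.
Lemma pbP (P : Prop) : reflect P (pb P).
Proof. by rewrite /pb; case: excluded_middle_informative => H; constructor. Qed.

Definition infoften (P : nat -> Prop) := forall N, exists m, N <= m /\ P m.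
Definition eventually (P : nat -> Prop) := exists N, forall m, N <= m -> P m.

Lemma not_infoften P : ~ infoften P -> eventually (fun m => ~ P m).
Proof.
move=> H; apply: NNPP => H2; apply: H => N; apply: NNPP => H3; apply: H2.
by exists N => m Nm Pm; apply: H3; exists m.
Qed.

Lemma eventually_and P1 P2 : eventually P1 -> eventually P2 -> eventually (fun m => P1 m /\ P2 m).
Proof.
move=> [N1 H1] [N2 H2]; exists (maxn N1 N2) => m Nm; split.
  by apply: H1; apply: leq_trans Nm; apply: leq_maxl.
by apply: H2; apply: leq_trans Nm; apply: leq_maxr.
Qed.

Lemma below_eventually (g : nat -> nat) V :
  (forall v, v < V -> eventually (fun m => g m != v)) -> eventually (fun m => V <= g m).
Proof.
elim: V => [|V IH] H; first by exists 0.
have [N H1] : eventually (fun m => V <= g m /\ g m != V).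
  apply: eventually_and; first by apply: IH => v vV; apply: H; lia.
  by apply: H.
by exists N => m /H1 [a b]; rewrite ltn_neqAle eq_sym b.
Qed.

Lemma min_infoften (g : nat -> nat) B : (forall m, g m <= B) ->
  exists p, infoften (fun m => g m = p) /\ eventually (fun m => p <= g m).
Proof.
move=> gB.
have ex : exists p, pb (infoften (fun m => g m = p)).
  apply: NNPP => nex.
  have [N HN] : eventually (fun m => B.+1 <= g m).
    apply: below_eventually => v _; apply: NNPP => ne.
    apply: nex; exists v; apply/pbP => M.
    apply: NNPP => nM; apply: ne; exists M => m Mm; apply/eqP => e; apply: nM.
    by exists m.
  by have := HN N (leqnn N); have := gB N; lia.
case: (ex_minnP ex) => p /pbP Hp minp; exists p; split => //.
apply: below_eventually => v vp; apply: NNPP => ne.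
have : p <= v by apply: minp; apply/pbP => M; apply: NNPP => nM; apply: ne;
  exists M => m Mm; apply/eqP => e; apply: nM; exists m.
lia.
Qed.

Lemma noninc_const (g : nat -> nat) m0 :
  (forall m, m0 <= m -> g m.+1 <= g m) -> exists T, m0 <= T /\ forall m, T <= m -> g m = g T.
Proof.
move=> H.
have mono : forall a b, m0 <= a -> a <= b -> g b <= g a.
  move=> a b a0; elim: b => [|b IH] ab; first by have -> : a = 0 by lia.
  case: (leqP a b) => ab'.
    by apply: leq_trans (IH ab'); apply: H; lia.
  by have -> : a = b.+1 by lia.
move: {2}(g m0) (leqnn (g m0)) => v; elim: v m0 H mono => [|v IH] m1 H mono gv.
  exists m1; split => // m m1m; have := mono _ _ (leqnn m1) m1m; lia.
case: (classic (exists m, m1 <= m /\ g m < g m1)) => [[m [m1m lt]]|nex].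
  have gmv : g m <= v by lia.
  have [T [mT HT]] := IH m (fun m' mm' => H m' (leq_trans m1m mm'))
    (fun a b ma ab => mono a b (leq_trans m1m ma) ab) gmv.
  by exists T; split => //; apply: leq_trans mT.
exists m1; split => // m m1m; apply/eqP; rewrite eqn_leq mono //=.
by rewrite leqNgt; apply/negP => lt; apply: nex; exists m.
Qed.

Lemma find_min (P : pred nat) B : (exists q, q < B /\ P q) ->
  let f := find P (iota 0 B) in [/\ P f, f < B & forall q, P q -> f <= q].
Proof.
move=> [q [qB Pq]] f.
have hs : has P (iota 0 B) by apply/hasP; exists q; rewrite // mem_iota.
have fs : f < B by rewrite -(size_iota 0 B) -has_find.
have Pf : P f by have := nth_find 0 hs; rewrite nth_iota.
split => // q' Pq'; rewrite leqNgt; apply/negP => lt.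
by have := before_find 0 lt; rewrite nth_iota ?Pq' //; lia.
Qed.

Section Konig.
Variable Q : finType.
Variable par : nat -> Q -> Q.

Fixpoint up (m d : nat) (y : Q) : Q := if d is d'.+1 then up m.-1 d' (par m.-1 y) else y.

Lemma up_comp m d1 d2 y : up m (d1 + d2) y = up (m - d1) d2 (up m d1 y).
Proof.
elim: d1 m y => [|d1 IH] m y /=; first by rewrite subn0.
by rewrite IH; congr up; lia.
Qed.

Lemma up_last m d y : d < m -> up m d.+1 y = par (m - d.+1) (up m d y).
Proof. by move=> dm; rewrite -addn1 up_comp /=; congr par; lia. Qed.

Lemma pigeon (A : {set Q}) (D : Q -> nat -> Prop) :
  (forall N, exists m', N <= m' /\ exists y, y \in A /\ D y m') ->
  exists y, y \in A /\ forall N, exists m', N <= m' /\ D y m'.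
Proof.
move=> H; apply: NNPP => nex.
have Hy : forall y, exists N, y \in A -> forall m', N <= m' -> ~ D y m'.
  move=> y; apply: NNPP => ne; apply: nex; exists y.
  have yA : y \in A by apply: NNPP => nA; apply: ne; exists 0 => /nA.
  split => // N; apply: NNPP => nN; apply: ne; exists N => _ m' Nm' Dm; apply: nN.
  by exists m'.
pose Nf y := proj1_sig (constructive_indefinite_description _ (Hy y)).
have NfP y : y \in A -> forall m', Nf y <= m' -> ~ D y m'.
  by rewrite /Nf; case: constructive_indefinite_description.
have [m' [Nm' [y [yA Dy]]]] := H (\max_(y : Q) Nf y).
by apply: (NfP y yA m') => //; apply: leq_trans Nm'; apply: leq_bigmax.
Qed.

Variables (C : nat -> {set Q}) (T : nat).
Hypothesis Cne : forall m, T <= m -> C m != set0.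
Hypothesis Cpar : forall m y, T <= m -> y \in C m.+1 -> par m y \in C m.

Lemma up_in m d y : T <= m - d -> d <= m -> y \in C m -> up m d y \in C (m - d).
Proof.
elim: d m y => [|d IH] m y /= Tm dm yC; first by rewrite subn0.
have e : m = m.-1.+1 by lia.
have -> : m - d.+1 = m.-1 - d by lia.
apply: IH; [lia|lia|]; apply: Cpar; first by lia.
by rewrite -e.
Qed.

Definition desc m y := forall m', m <= m' -> exists z, z \in C m' /\ up m' (m' - m) z = y.

Lemma desc_of_inf m y : T <= m ->
  (forall N, exists m', N <= m' /\ m <= m' /\ exists z, z \in C m' /\ up m' (m' - m) z = y) ->
  desc m y.
Proof.
move=> Tm H m' mm'; have [m'' [Nm'' [mm'' [z [zC uz]]]]] := H m'.
exists (up m'' (m'' - m') z); split.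
  have := @up_in m'' (m'' - m') z; rewrite (_ : m'' - (m'' - m') = m'); last by lia.
  by apply; [lia|lia|].
have e : m' = m'' - (m'' - m') by lia.
rewrite {1}e -up_comp (_ : m'' - m' + (m' - m) = m'' - m) //; lia.
Qed.

Lemma good_root : exists y, y \in C T /\ desc T y.
Proof.
have HH : forall N, exists m', N <= m' /\ exists y, y \in C T /\
   (fun y m' => T <= m' /\ exists z, z \in C m' /\ up m' (m' - T) z = y) y m'.
  move=> N; exists (maxn N T); split; first exact: leq_maxl.
  have /set0Pn[z zC] := Cne (leq_maxr N T).
  exists (up (maxn N T) (maxn N T - T) z); split; last first.
    by split; [exact: leq_maxr| exists z].
  have := @up_in (maxn N T) (maxn N T - T) z.
  rewrite (_ : maxn N T - (maxn N T - T) = T); last by have := leq_maxr N T; lia.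
  by apply => //; have := leq_maxr N T; lia.
have [y [yC Hy]] := pigeon HH.
by exists y; split => //; apply: desc_of_inf.
Qed.

Lemma good_child m y : T <= m -> y \in C m -> desc m y ->
  exists c, [/\ c \in C m.+1, par m c = y & desc m.+1 c].
Proof.
move=> Tm yC dy.
have HH : forall N, exists m', N <= m' /\ exists c, c \in [set c in C m.+1 | par m c == y] /\
  (fun c m' => m.+1 <= m' /\ exists z, z \in C m' /\ up m' (m' - m.+1) z = c) c m'.
  move=> N; have [z [zC uz]] := dy (maxn N m.+1) (leq_trans (leqnSn m) (leq_maxr _ _)).
  exists (maxn N m.+1); split; first exact: leq_maxl.
  set M := maxn N m.+1 in zC uz *.
  have Mm : m.+1 <= M by apply: leq_maxr.
  exists (up M (M - m.+1) z); split; last by split => //; exists z.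
  rewrite inE; apply/andP; split.
    have := @up_in M (M - m.+1) z; rewrite (_ : M - (M - m.+1) = m.+1); last by lia.
    by apply => //; lia.
  apply/eqP; rewrite -uz (_ : M - m = (M - m.+1) + 1); last by lia.
  by rewrite up_comp (_ : M - (M - m.+1) = m.+1) /=; last by lia.
have [c [cA Hc]] := pigeon HH.
move: cA; rewrite inE => /andP[cC /eqP pc]; exists c; split => //.
by apply: desc_of_inf => //; lia.
Qed.

Lemma konig : exists x : nat -> Q,
  forall m, T <= m -> x m \in C m /\ par m (x m.+1) = x m.
Proof.
have [y0 [y0C dy0]] := good_root.
pose good m y := pb (y \in C m /\ desc m y).
pose fix xk d := match d with
  | 0 => odflt y0 [pick y | good T y]
  | d'.+1 => odflt y0 [pick c | good (T + d') .+1 c && (par (T + d') c == xk d')]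
  end.
have H : forall d, good (T + d) (xk d) /\ par (T + d) (xk d.+1) = xk d.
  have G0 : forall d, good (T + d) (xk d).
    elim => [|d IH] /=.
      rewrite addn0; case: pickP => [y -> //|nP].
      by apply/pbP; split.
    case: pickP => [c /andP[gc _]|nP]; first by rewrite addnS.
    move/pbP: IH => [yC dy]; have [c [cC pc dc]] := good_child (leq_addr _ _) yC dy.
    exfalso; move: (nP c); rewrite pc eqxx andbT => /negP; apply; apply/pbP; split => //.
  move=> d; split; first exact: G0.
  rewrite /=; case: pickP => [c /andP[_ /eqP //]|nP].
  move/pbP: (G0 d) => [yC dy]; have [c [cC pc dc]] := good_child (leq_addr _ _) yC dy.
  exfalso; move: (nP c); rewrite pc eqxx andbT => /negP; apply; apply/pbP; split => //.
exists (fun m => xk (m - T)) => m Tm.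
have [/pbP [h1 _] h2] := H (m - T).
rewrite (_ : T + (m - T) = m) in h1 h2; last by lia.
split => //; rewrite (_ : m.+1 - T = (m - T).+1) //; lia.
Qed.
End Konig.

Section Run.
Variables (Q : finType) (F : {set Q}) (Sn : nat -> {set Q}) (par : nat -> Q -> Q)
  (L : nat -> seq {set Q}).
Hypothesis HInv : forall m, Inv (L m).
Hypothesis Hcov : forall m, cover (L m) = Sn m.
Hypothesis Hstep : forall m, L m.+1 = stepL F (Sn m.+1) (par m) (L m).

Definition LL m := ext F (map (img (Sn m.+1) (par m)) (L m)).
Definition cap := (2 * #|Q|).+1.
Definition pr m := prio cap (L m) (LL m).

Lemma Lnext m : L m.+1 = next (LL m).
Proof. exact: Hstep. Qed.

Lemma ndLL m h : h < size (L m) -> nd (LL m) h = img (Sn m.+1) (par m) (nd (L m) h).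
Proof. by move=> hs; rewrite /LL nd_ext_old ?size_map // nd_map. Qed.

Lemma sizeLL m : size (LL m) = size (L m) + size (L m).
Proof. by rewrite /LL size_ext size_map. Qed.

Lemma sizeL m : size (L m) <= #|Q|.
Proof. exact: size_Inv. Qed.

Lemma pairwiseLL m : pairwise (@lam Q) (LL m).
Proof. by case: (HInv m) => _ pL _ _; apply/pairwise_ext/pairwise_map_img. Qed.

Definition frozen j T := forall m, T <= m -> j < size (L m) /\ (forall h, h <= j -> kp (LL m) h).
Definition greenIO j := infoften (fun m => gr (LL m) j).

Lemma frozen_pos j T m h : frozen j T -> T <= m -> h <= j -> pos (LL m) h = h.
Proof.
move=> fr Tm hj; apply: pos_id => x xh; have [_ K] := fr m Tm; apply: K; lia.
Qed.

Lemma frozen_nd j T m h : frozen j T -> T <= m -> h <= j -> nd (L m.+1) h = nd (LL m) h.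
Proof.
move=> fr Tm hj; have [js K] := fr m Tm.
rewrite Lnext -{1}(frozen_pos fr Tm hj); apply: next_nd; last exact: K.
by rewrite sizeLL; lia.
Qed.

Lemma kp_ne (L0 : seq {set Q}) h : kp L0 h -> nd L0 h != set0.
Proof. by rewrite /kp /rem negb_or => /andP[]. Qed.

Lemma accept_of_frozen j T : frozen j T -> greenIO j ->
  exists p, ~~ odd p /\ infoften (fun m => pr m = p) /\ eventually (fun m => p <= pr m).
Proof.
move=> fr gio.
have [p [io ev]] := @min_infoften pr cap (fun m => prio_cap _ _ _).
exists p; split => //; apply/negP => op.
case: (ev) => N HN.
have [m [Nm gm]] := gio (maxn N T).
have [js _] := fr m (leq_trans (leq_maxr _ _) Nm).
have pj : p <= (2 * j).+2.
  apply: leq_trans (HN m (leq_trans (leq_maxl _ _) Nm)) _.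
  exact: prio_le (gr_ev js gm).
have [m' [Nm' e]] := io (maxn N T).
have Tm' : T <= m' by apply: leq_trans Nm'; apply: leq_maxr.
have [js' K] := fr m' Tm'.
have jQ := sizeL m'.
case: (prio_in cap (L m') (LL m')) => [ec|].
  by move: e; rewrite /pr ec /cap => ec'; move: op pj; rewrite -ec'; lia.
rewrite -/(pr m') e => /ev_inv [[h [hs eh ne]]|[h [hs eh g]]].
  have hj : h <= j by lia.
  by move: (kp_ne (K h hj)); rewrite ne.
by move: op; rewrite eh /=; lia.
Qed.

Lemma frozen_of_accept :
  (exists p, ~~ odd p /\ infoften (fun m => pr m = p) /\ eventually (fun m => p <= pr m)) ->
  exists j T, frozen j T /\ greenIO j.
Proof.
move=> [p [ev [io [N HN]]]].
have ev_gr : forall m, pr m = p -> exists i, [/\ i < size (L m), p = (2 * i).+2 & gr (LL m) i].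
  move=> m e; case: (prio_in cap (L m) (LL m)) => [ec|].
    by move: ev; rewrite -e /pr ec /cap /=; lia.
  rewrite -/(pr m) e => /ev_inv [[h [hs eh _]]|[h [hs eh g]]].
    by move: ev; rewrite eh /=; lia.
  by exists h.
have [m0 [Nm0 e0]] := io N.
have [i [is0 pi _]] := ev_gr m0 e0.
have kpall : forall m, N <= m -> i < size (L m) -> forall h, h <= i -> kp (LL m) h.
  move=> m Nm isz h hi; rewrite /kp /rem negb_or; apply/andP; split.
    apply/negP => ne; have := prio_le cap (red_ev (_ : h < size (L m)) ne).
    by rewrite -/(pr m); have := HN m Nm; lia.
  apply/negP => /existsP[h' /andP[g _]].
  have h's : h' < size (L m) by have := ltn_ord h'; lia.
  have := prio_le cap (gr_ev h's g); rewrite -/(pr m); have := HN m Nm; have := ltn_ord h'; lia.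
exists i, m0; split.
  move=> m m0m; suff sz : i < size (L m) by split => //; apply: kpall => //; lia.
  elim: m m0m => [|m IH] m0m.
    have e : m0 = 0 by lia.
    by move: is0; rewrite e.
  case: (leqP m0 m) => lt; last by have -> : m.+1 = m0 by lia.
  have isz := IH lt; have K := kpall m (leq_trans Nm0 lt) isz.
  rewrite Lnext size_next.
  apply: leq_trans (pos_le (kp (LL m)) (_ : i.+1 <= size (LL m))); last by rewrite sizeLL; lia.
  by rewrite pos_id // => x xi; apply: K; lia.
move=> N'; have [m [Nm e]] := io (maxn N' N).
have [h [hs eh g]] := ev_gr m e.
exists m; split; first by apply: leq_trans Nm; apply: leq_maxl.
by have -> : i = h by lia.
Qed.

(* completeness: an accepting branch yields a frozen node green infinitely often *)
Section Complete.
Variable r : nat -> Q.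
Hypothesis Hr : forall m, r m \in Sn m.
Hypothesis Hrp : forall m, par m (r m.+1) = r m.
Hypothesis HrF : infoften (fun m => r m.+1 \in F).

Lemma r_in0 m : r m \in nd (L m) 0 /\ 0 < size (L m).
Proof.
move: (Hr m); rewrite -Hcov => /coverP [i isz ri].
case: (HInv m) => _ _ _ hd; split; last by lia.
exact: (subsetP (hd i isz)).
Qed.

Lemma r_img m h : h < size (L m) -> (r m.+1 \in nd (LL m) h) = (r m \in nd (L m) h).
Proof. by move=> hs; rewrite ndLL // inE Hr Hrp. Qed.

Lemma frozen0 : frozen 0 0.
Proof.
move=> m _; have [r0 s0] := r_in0 m; split => // h; rewrite leqn0 => /eqP ->.
apply: kp0; first by rewrite sizeLL; lia.
by apply/set0Pn; exists (r m.+1); rewrite r_img.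
Qed.


Lemma stepA i T : frozen i T -> (forall m, T <= m -> r m \in nd (L m) i) ->
  greenIO i \/ exists j T', [/\ i < j, frozen j T' & forall m, T' <= m -> r m \in nd (L m) j].
Proof.
move=> fr ri; case: (classic (greenIO i)) => [G|nG]; [by left|right].
have [T1 HT1] := not_infoften nG.
set T2 := maxn T1 T.
have T2T : T <= T2 by apply: leq_maxr.
have T2T1 : T1 <= T2 by apply: leq_maxl.
pose Pm m q := [&& i < q, q < size (L m) & r m \in nd (L m) q].
have K1 : forall m h, T2 <= m -> h < size (L m) -> gr (LL m) h -> r m \in nd (L m) h -> i < h.
  move=> m h T2m hs g rh; have [isz K] := fr m (leq_trans T2T T2m).
  case: (ltngtP i h) => // [hi|ehi].
    exfalso; have isL : i < size (LL m) by rewrite sizeLL; lia.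
    case/orP: (lamP (pairwiseLL m) hi isL) => [sub|].
    - move: (K i (leqnn i)); rewrite /kp /rem negb_or => /andP[_ /negP]; apply.
      by apply/existsP; exists (Ordinal hi); rewrite g sub.
    - move/disjointP => D; apply: (D (r m.+1)); rewrite r_img //.
      exact: ri (leq_trans T2T T2m).
  by exfalso; apply: (HT1 m (leq_trans T2T1 T2m)); rewrite -ehi in g.
have C2 : forall m q, T2 <= m -> Pm m q -> (forall q0, Pm m q0 -> q <= q0) ->
   [/\ Pm m.+1 (pos (LL m) q), pos (LL m) q <= q &
       (pos (LL m) q = q -> forall h, h <= q -> kp (LL m) h)].
  move=> m q T2m /and3P[iq qs rq] minq.
  have Tm : T <= m by apply: leq_trans T2m.
  have kq : kp (LL m) q.
    rewrite /kp /rem negb_or; apply/andP; split.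
      by apply/set0Pn; exists (r m.+1); rewrite r_img.
    apply/negP => /existsP[h' /andP[g sub]].
    have h's : h' < size (L m) by have := ltn_ord h'; lia.
    have rh' : r m \in nd (L m) h'.
      by rewrite -r_img //; apply: (subsetP sub); rewrite r_img.
    have := K1 m h' T2m h's g rh' => ih'.
    have : q <= h' by apply: minq; rewrite /Pm ih' h's rh'.
    by have := ltn_ord h'; lia.
  have [isz K] := fr m Tm.
  have qs2 : q < size (LL m) by rewrite sizeLL; lia.
  split.
  - rewrite /Pm; apply/and3P; split.
    + rewrite -{1}(frozen_pos fr Tm (leqnn i)); apply: pos_lt => //; exact: K.
    + by rewrite Lnext; apply: pos_lt_size.
    + by rewrite Lnext next_nd // r_img.
  - exact: pos_leh.
  - move=> e h hq; case: (ltngtP h q) hq => // [hq _|-> _ //].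
    move/eqP: e; rewrite /pos -{2}(size_iota 0 q) -all_count => /allP A.
    by apply: A; rewrite mem_iota.
have C1 : exists m, T2 <= m /\ exists q, Pm m q.
  have [m1 [T2m1 rF]] := HrF T2.
  case: (classic (exists q, Pm m1 q)) => [ex|nex]; first by exists m1.
  exists m1.+1; split; first by lia.
  have Tm1 : T <= m1 by apply: leq_trans T2m1.
  have [isz K] := fr m1 Tm1.
  set L1 := map (img (Sn m1.+1) (par m1)) (L m1).
  have sL1 : size L1 = size (L m1) by rewrite size_map.
  have ro : r m1.+1 \in own L1 i.
    rewrite inE; apply/andP; split; last first.
      by rewrite nd_map // inE Hr Hrp ri.
    apply/negP => /bigcupP[j ij rj].
    apply: nex; exists j; rewrite /Pm ij -sL1 ltn_ord /=.
    by move: rj; rewrite nd_map -?sL1 // inE => /andP[_]; rewrite Hrp.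
  set c := size (L m1) + i.
  have ndc : nd (LL m1) c = own L1 i :&: F.
    by rewrite /LL /c -sL1 nd_ext_new // sL1.
  have rc : r m1.+1 \in nd (LL m1) c by rewrite ndc inE ro rF.
  have kc : kp (LL m1) c.
    rewrite /kp /rem negb_or; apply/andP; split; first by apply/set0Pn; exists (r m1.+1).
    apply/negP => /existsP[h' /andP[g sub]].
    have rh' := subsetP sub _ rc.
    case: (ltnP h' (size (L m1))) => h's.
      have rh : r m1 \in nd (L m1) h' by rewrite -r_img.
      have ih' := K1 m1 h' T2m1 h's g rh.
      by apply: nex; exists h'; rewrite /Pm ih' h's rh.
    have hlt : nat_of_ord h' < size (L m1) + i := ltn_ord h'.
    have e1 : nat_of_ord h' = size L1 + (h' - size L1) by move: sL1 h's; clear; lia.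
    have e2 : h' - size L1 < i by move: sL1 h's hlt; clear => a b cc; lia.
    have e3 : i < size L1 by move: sL1 isz; clear; lia.
    move: rh'; rewrite e1.
    rewrite /LL nd_ext_new; last by rewrite size_map; move: e2 e3 sL1; clear => a b cc; lia.
    case/setIP => ro' _.
    apply: (own_disj e2 e3 ro').
    by apply: (subsetP (own_sub _ _)).
  have cs : c < size (LL m1) by rewrite sizeLL /c; lia.
  exists (pos (LL m1) c); rewrite /Pm; apply/and3P; split.
  - rewrite -{1}(frozen_pos fr Tm1 (leqnn i)); apply: pos_lt; [rewrite /c; lia|exact: K].
  - by rewrite Lnext; apply: pos_lt_size.
  - by rewrite Lnext next_nd.
have [m2 [T2m2 [q2 Pq2]]] := C1.
pose f m := find (Pm m) (iota 0 #|Q|).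
have Pbound : forall m q, Pm m q -> q < #|Q|.
  by move=> m q /and3P[_ qs _]; apply: leq_trans qs (sizeL m).
have fP : forall m, (exists q, Pm m q) -> [/\ Pm m (f m) & forall q, Pm m q -> f m <= q].
  move=> m [q Pq]; have [] := @find_min (Pm m) #|Q|; first by exists q; split => //; apply: Pbound Pq.
  by move=> a _ c; split.
have Pall : forall m, m2 <= m -> exists q, Pm m q.
  elim => [|m IH] m2m.
    have e : m2 = 0 by lia.
    by rewrite -e; exists q2.
  case: (leqP m2 m) => lt; last first.
    have e : m.+1 = m2 by lia.
    by rewrite e; exists q2.
  have [P1 P2] := fP m (IH lt).
  have [a _ _] := C2 m (f m) (leq_trans T2m2 lt) P1 P2.
  by exists (pos (LL m) (f m)).
have fdec : forall m, m2 <= m -> f m.+1 <= f m.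
  move=> m m2m; have [P1 P2] := fP m (Pall m m2m).
  have [a b _] := C2 m (f m) (leq_trans T2m2 m2m) P1 P2.
  have [_ P2'] := fP m.+1 (Pall m.+1 (leq_trans m2m (leqnSn m))).
  by apply: leq_trans (P2' _ a) b.
have [T' [m2T' HT']] := noninc_const fdec.
exists (f T'), T'.
have PT : forall m, T' <= m -> Pm m (f T').
  by move=> m T'm; rewrite -(HT' m T'm); case: (fP m (Pall m (leq_trans m2T' T'm))).
have [/and3P[iT _ _] _] := fP T' (Pall T' m2T').
split => //.
  move=> m T'm; have /and3P[_ fs _] := PT m T'm; split => //.
  have [P1 P2] := fP m (Pall m (leq_trans m2T' T'm)).
  have [a b c] := C2 m (f m) (leq_trans T2m2 (leq_trans m2T' T'm)) P1 P2.
  have [_ P2'] := fP m.+1 (Pall m.+1 (leq_trans (leq_trans m2T' T'm) (leqnSn m))).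
  have e1 := HT' m T'm; have e2 := HT' m.+1 (leq_trans T'm (leqnSn m)).
  have le1 : f T' <= pos (LL m) (f m) by rewrite -e2; exact: P2' _ a.
  have le1' : f m <= pos (LL m) (f m) by rewrite {1}e1.
  have pe : pos (LL m) (f m) = f m by apply/eqP; rewrite eqn_leq b le1'.
  by rewrite -e1; apply: c.
by move=> m T'm; have /and3P[_ _ ->] := PT m T'm.
Qed.

Lemma complete : exists j T, frozen j T /\ greenIO j.
Proof.
suff H : forall d i T, #|Q| - i <= d -> frozen i T ->
    (forall m, T <= m -> r m \in nd (L m) i) -> exists j T, frozen j T /\ greenIO j.
  apply: (H #|Q| 0 0); [by rewrite subn0 | exact: frozen0 | by move=> m _; case: (r_in0 m)].
elim => [|d IH] i T di fr ri.
  have [isz _] := fr T (leqnn T); have := sizeL T; lia.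
case: (stepA fr ri) => [G|[j [T' [ij frj rj]]]]; first by exists i, T.
apply: (IH j T') => //.
have [js _] := frj T' (leqnn T'); have := sizeL T'; lia.
Qed.

End Complete.
Section Sound.
Hypothesis Hpar : forall m y, y \in Sn m.+1 -> par m y \in Sn m.

Lemma sound j T : frozen j T -> greenIO j ->
  exists x : nat -> Q, [/\ forall m, x m \in Sn m, forall m, par m (x m.+1) = x m &
     infoften (fun m => x m \in F)].
Proof.
move=> fr gio.
pose C m := nd (L m) j.
have CS : forall m, T <= m -> C m.+1 = img (Sn m.+1) (par m) (C m).
  move=> m Tm; have [js _] := fr m Tm.
  by rewrite /C (frozen_nd fr Tm (leqnn j)) ndLL.
have Cne : forall m, T <= m -> C m != set0.
  by move=> m Tm; have [js _] := fr m Tm; case: (HInv m) => ne _ _ _; apply: ne.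
have Cpar : forall m y, T <= m -> y \in C m.+1 -> par m y \in C m.
  by move=> m y Tm; rewrite CS // inE => /andP[].
have CSn : forall m, T <= m -> forall y, y \in C m -> y \in Sn m.
  move=> m Tm y yC; have [js _] := fr m Tm; rewrite -Hcov; apply/coverP; by exists j.
have [x Hx] := konig Cne Cpar.
have younger : forall m y q, T <= m -> j < q -> q < size (L m.+1) -> y \in nd (L m.+1) q ->
    exists h, [/\ j < h, h < size (LL m), kp (LL m) h & y \in nd (LL m) h].
  move=> m y q Tm jq qs yq; move: qs yq; rewrite Lnext => qs yq.
  have [h [hs kh ph e]] := next_surj qs.
  exists h; split => //; last by rewrite -e.
  rewrite ltnNge; apply/negP => hj.
  by move: (frozen_pos fr Tm hj) jq; rewrite ph; lia.
have flag : forall g1, T <= g1 -> gr (LL g1) j -> forall m, g1 < m -> forall y, y \in C m ->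
    (exists q, [&& j < q, q < size (L m) & y \in nd (L m) q]) ->
    exists s, [/\ g1.+2 <= s, s <= m & up par m (m - s) y \in F].
  move=> g1 Tg1 g1gr; elim => [//|m IH] g1m y yC [q /and3P[jq qs yq]].
  have Tm : T <= m by lia.
  have [h [jh hs kh yh]] := younger m y q Tm jq qs yq.
  have [js _] := fr m Tm.
  case: (ltngtP g1 m) => [lt|gt|eg]; [|by exfalso; lia|].
    case: (ltnP h (size (L m))) => hL.
      move: (yh); rewrite ndLL // inE => /andP[_ pyh].
      have pyC : par m y \in C m by apply: Cpar.
      have [s [s1 s2 sF]] := IH lt (par m y) pyC (ex_intro _ h (introT and3P (And3 jh hL pyh))).
      exists s; split; [by lia|by lia|].
      by rewrite (_ : m.+1 - s = (m - s).+1) //=; lia.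
    exists m.+1; split; [by lia|by []|].
    rewrite subnn /=; move: yh; rewrite sizeLL in hs.
    rewrite (_ : h = size (map (img (Sn m.+1) (par m)) (L m)) + (h - size (L m))); last by rewrite size_map; lia.
    by rewrite /LL nd_ext_new ?size_map; [case/setIP|lia].
  exfalso; rewrite -eg in h jh hs kh yh yC js.
  have yj : y \in nd (LL g1) j by rewrite ndLL // -CS.
  case/orP: (lamP (pairwiseLL g1) jh hs) => [sub|/disjointP D]; last exact: D y yh yj.
  move: kh; rewrite /kp /rem negb_or => /andP[_ /negP]; apply.
  by apply/existsP; exists (Ordinal jh); rewrite g1gr sub.
have green2 : forall g1 g2, T <= g1 -> g1 < g2 -> gr (LL g1) j -> gr (LL g2) j ->
    forall y, y \in C g2.+1 -> exists s, [/\ g1.+2 <= s, s <= g2.+1 & up par g2.+1 (g2.+1 - s) y \in F].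
  move=> g1 g2 Tg1 g12 gr1 gr2 y yC.
  have Tg2 : T <= g2 by lia.
  have [js _] := fr g2 Tg2.
  have yj : y \in nd (LL g2) j by rewrite ndLL // -CS.
  move: gr2 => /andP[/andP[_ /eqP no] _].
  have : y \notin own (LL g2) j by rewrite no inE.
  rewrite inE yj andbT negbK => /bigcupP[h jh yh].
  case: (ltnP h (size (L g2))) => hL.
    move: (yh); rewrite ndLL // inE => /andP[_ pyh].
    have pyC : par g2 y \in C g2 by apply: Cpar.
    have [s [s1 s2 sF]] := flag g1 Tg1 gr1 g2 g12 (par g2 y) pyC (ex_intro _ (nat_of_ord h) (introT and3P (And3 jh hL pyh))).
    exists s; split; [by lia|by lia|].
    by rewrite (_ : g2.+1 - s = (g2 - s).+1) //=; lia.
  exists g2.+1; split; [by lia|by []|].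
  have hs : nat_of_ord h < size (L g2) + size (L g2) by rewrite -sizeLL; exact: ltn_ord h.
  rewrite subnn /=; move: yh.
  have e1 : nat_of_ord h = size (map (img (Sn g2.+1) (par g2)) (L g2)) + (h - size (L g2)).
    by rewrite size_map; move: hL; clear => a; lia.
  have e2 : h - size (L g2) < size (map (img (Sn g2.+1) (par g2)) (L g2)).
    by rewrite size_map; move: hs hL; clear => a b; lia.
  by rewrite e1 /LL nd_ext_new //; case/setIP.
have xbranch : forall d m, T <= m - d -> d <= m -> up par m d (x m) = x (m - d).
  elim => [|d IH] m Tmd dm /=; first by rewrite subn0.
  have e : m = m.-1.+1 by lia.
  have Tm1 : T <= m.-1 by lia.
  have [_ px] := Hx m.-1 Tm1.
  rewrite -e in px; rewrite px IH; [congr x; lia|lia|lia].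
have xF : infoften (fun m => x m \in F).
  move=> N; have [g1 [Ng1 gr1]] := gio (maxn N T).
  have [g2 [g12 gr2]] := gio g1.+1.
  have Tg1 : T <= g1 by apply: leq_trans Ng1; apply: leq_maxr.
  have Tg2 : T <= g2.+1 by lia.
  have [xC _] := Hx g2.+1 Tg2.
  have [s [s1 s2 sF]] := green2 g1 g2 Tg1 g12 gr1 gr2 _ xC.
  exists s; split; first by have := leq_maxl N T; lia.
  by rewrite xbranch in sF; [rewrite (_ : g2.+1 - (g2.+1 - s) = s) in sF; [|lia]|lia|lia].
pose x' m := if m < T then up par T (T - m) (x T) else x m.
have xTS : x T \in Sn T by apply: CSn => //; case: (Hx T (leqnn T)).
exists x'; split.
- move=> m; rewrite /x'; case: ltnP => mT.
    have H := @up_in Q par Sn 0 (fun m y _ => @Hpar m y) T (T - m) (x T).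
    have e : T - (T - m) = m by lia.
    rewrite e in H; apply: H => //; lia.
  by apply: CSn => //; case: (Hx m mT).
- move=> m; rewrite /x'; case: (ltnP m.+1 T) => m1T.
    rewrite (_ : m < T) //; last by lia.
    rewrite (_ : T - m = (T - m.+1).+1); last by lia.
    by rewrite up_last; [congr par; lia|lia].
  case: (ltnP m T) => mT; last by case: (Hx m mT).
  have e : T = m.+1 by lia.
  by rewrite e subSnn /=.
- move=> N; have [m [Nm xm]] := xF (maxn N T).
  exists m; split; first by apply: leq_trans Nm; apply: leq_maxl.
  by rewrite /x' ltnNge (leq_trans (leq_maxr N T) Nm).
Qed.
End Sound.
End Run.



Lemma card_setQ (T : finType) : #|{: {set T}}| = 2 ^ #|T|.
Proof. by have := card_powerset [set: T]; rewrite powersetT !cardsT. Qed.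

Section Main.
Variables (Sigma Q : finType) (Q0 : {set Q}) (Delta : {set Q * Sigma * Q}) (F : {set Q})
  (k : nat) (Fs : 'I_k -> {set Q}) (bs : 'I_k -> nat).
Local Notation n := #|Q|.

Definition CT := {dffun forall j : 'I_k, 'I_(bs j).+1}.
Definition St := ('I_(2 * n).+1 * (n.-tuple {set Q}) * {ffun Q -> CT})%type.

Definition preds (S : {set Q}) (a : Sigma) (y : Q) := [set p in S | (p, a, y) \in Delta].
Definition tpar S a y := odflt y [pick p in preds S a y].
Definition cnt (C : {ffun Q -> CT}) (p y : Q) (j : 'I_k) : nat :=
  if y \in Fs j then 0 else (C p j : nat).+1.
Definition okc C p y := [forall j, cnt C p y j < bs j].
Definition Snext S C a := [set y | (#|preds S a y| == 1) && okc C (tpar S a y) y].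
Definition mkct (f : 'I_k -> nat) : CT := finfun (fun j => @inord (bs j) (f j)).
Definition Cnext S C a : {ffun Q -> CT} := [ffun y => mkct (cnt C (tpar S a y) y)].
Definition c0 (y : Q) (j : 'I_k) : nat := if y \in Fs j then 0 else 1.
Definition S0 := [set y in Q0 | [forall j, c0 y j < bs j]].
Definition C0 : {ffun Q -> CT} := [ffun y => mkct (c0 y)].
Definition enc (L : seq {set Q}) : n.-tuple {set Q} := [tuple nth set0 L i | i < n].
Definition dec (t : n.-tuple {set Q}) : seq {set Q} := [seq X <- t | X != set0].
Definition L0 : seq {set Q} := if S0 == set0 then [::] else [:: S0].
Definition init : St := (ord0, enc L0, C0).
Definition stp (s : St) (a : Sigma) : St :=
  let L := dec s.1.2 in let C := s.2 in let S := cover L in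
  let S' := Snext S C a in let p := tpar S a in
  (inord (prio (2 * n).+1 L (ext F (map (img S' p) L))).-1, enc (stepL F S' p L), Cnext S C a).
Definition PA : DPA Sigma :=
  {| dQ := St; dq0 := init; ddelta := stp; dprio := fun s => (nat_of_ord s.1.1).+1 |}.

Lemma mkctE f j : (mkct f j : nat) = if f j < (bs j).+1 then f j else 0.
Proof. rewrite /mkct ffunE /inord /insubd; case: insubP => [u -> /= ->|/negbTE -> //]. by []. Qed.

Lemma dec_enc L : Inv L -> dec (enc L) = L.
Proof.
move=> IL; have sz := size_Inv IL; case: IL => ne _ _ _.
have e : tval (enc L) = [seq nth set0 L i | i <- iota 0 n].
  by rewrite /= -val_enum_ord -map_comp.
rewrite /dec e -(subnKC sz) iotaD map_cat filter_cat.
have -> : [seq nth set0 L i | i <- iota 0 (size L)] = L by rewrite -/(mkseq _ _) mkseq_nth.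
rewrite (_ : [seq X <- L | X != set0] = L); last first.
  apply/all_filterP/(all_nthP set0) => i il; exact: ne.
rewrite (_ : [seq X <- _ | X != set0] = [::]) ?cats0 //.
apply/eqP; rewrite -[_ == _]negbK -has_filter; apply/hasPn => X /mapP[i].
by rewrite mem_iota => /andP[li _] ->; rewrite nth_default // eqxx.
Qed.

Lemma Inv_L0 : Inv L0.
Proof.
rewrite /L0; case: ifP => e; first by split => // i.
split => //=.
- by case => // _; rewrite /nd /= e.
- case => // _; rewrite /own /nd /=.
  rewrite (_ : \bigcup_(j < 1 | 0 < j) _ = set0) ?setD0 ?e //.
  by rewrite big_pred0 // => -[[]].
- by case.
Qed.

Lemma cover_L0 : cover L0 = S0.
Proof.
apply/setP => y; apply/coverP/idP => [[i]|yS].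
  by rewrite /L0; case: ifP => e //=; case: i => // _; rewrite /nd.
have ne : S0 != set0 by apply/set0Pn; exists y.
by exists 0; rewrite /L0 (negbTE ne) /nd.
Qed.

Lemma preds1 S a y : #|preds S a y| == 1 -> tpar S a y \in preds S a y.
Proof.
move=> /eqP c; rewrite /tpar; case: pickP => [p -> //|H].
by move: c; rewrite (eq_card0 H).
Qed.

Lemma Snext_par S C a y : y \in Snext S C a -> tpar S a y \in S /\ (tpar S a y, a, y) \in Delta.
Proof. by rewrite inE => /andP[/preds1]; rewrite inE => /andP[-> ->]. Qed.

Variable w : word Sigma.
Definition st m := dpa_run PA w m.
Definition Lm m := dec (st m).1.2.
Definition Cm m := (st m).2.
Definition Sm m := cover (Lm m).
Definition parm m := tpar (Sm m) (w m).

Lemma st_succ m : st m.+1 = stp (st m) (w m).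
Proof. by []. Qed.

Lemma Lm_Inv m : Inv (Lm m) /\ Lm m.+1 = stepL F (Snext (Sm m) (Cm m) (w m)) (parm m) (Lm m).
Proof.
elim: m => [|m [IH _]].
  have I0 : Inv (Lm 0) by rewrite /Lm /= dec_enc //; apply: Inv_L0.
  by split => //; rewrite /Lm st_succ /= dec_enc //; apply: Inv_step.
have I1 : Inv (Lm m.+1) by rewrite /Lm st_succ /= dec_enc //; apply: Inv_step.
by split => //; rewrite /Lm [st m.+2]st_succ /= dec_enc //; apply: Inv_step.
Qed.

Lemma Sm_succ m : Sm m.+1 = Snext (Sm m) (Cm m) (w m).
Proof.
rewrite /Sm (proj2 (Lm_Inv m)) cover_step // => y /Snext_par [h _].
by rewrite /parm; exact: h.
Qed.

Lemma Cm_succ m : Cm m.+1 = Cnext (Sm m) (Cm m) (w m).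
Proof. by []. Qed.

Lemma Sm0 : Sm 0 = S0.
Proof. by rewrite /Sm /Lm /= dec_enc ?cover_L0 //; apply: Inv_L0. Qed.

Lemma Cm0 : Cm 0 = C0.
Proof. by []. Qed.

Lemma Hstep m : Lm m.+1 = stepL F (Sm m.+1) (parm m) (Lm m).
Proof. by rewrite Sm_succ; case: (Lm_Inv m). Qed.

Lemma Hpar m y : y \in Sm m.+1 -> parm m y \in Sm m.
Proof. by rewrite Sm_succ => /Snext_par []. Qed.

Lemma prio_pos (cap : nat) (L L2 : seq {set Q}) : 0 < cap -> 0 < prio cap L L2.
Proof.
move=> c; case: (prio_in cap L L2) => [-> //|/ev_inv [[h [_ -> _]]|[h [_ -> _]]]] //.
Qed.

Lemma dprio_succ m : dprio (st m.+1) = pr F Sm parm Lm m.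
Proof.
have e : (st m.+1).1.1 = inord (pr F Sm parm Lm m).-1.
  by rewrite st_succ /pr /LL /cap Sm_succ.
have p1 : 0 < pr F Sm parm Lm m by apply: prio_pos.
have p2 : pr F Sm parm Lm m <= (2 * n).+1 by apply: prio_cap.
have -> : dprio (st m.+1) = (nat_of_ord (st m.+1).1.1).+1 by [].
rewrite e inordK; lia.
Qed.


Fixpoint dd (r : nat -> Q) (j : 'I_k) (m : nat) : nat :=
  if m is m'.+1 then (if r m \in Fs j then 0 else (dd r j m').+1)
  else (if r 0 \in Fs j then 0 else 1).

Lemma dd_le r j m : dd r j m <= m.+1.
Proof. elim: m => [|m IH] /=; case: ifP => //. Qed.

Lemma dd_hit r j m : dd r j m <= m -> r (m - dd r j m) \in Fs j.
Proof.
elim: m => [|m IH] /=; first by case: ifP.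
case: ifP => [h _|_ le]; first by rewrite subn0.
by rewrite subSS; apply: IH.
Qed.

Lemma dd_nohit r j m t : t <= m -> m - t < dd r j m -> r t \notin Fs j.
Proof.
elim: m t => [|m IH] t /=.
  by rewrite leqn0 => /eqP ->; case: ifP.
case: ifP => // nh tm; case: (ltngtP t m.+1) tm => // [tm _|-> _]; last by rewrite nh.
move=> lt; apply: IH; lia.
Qed.

Lemma hit_iff r j b : 0 < b -> (forall m, dd r j m < b) <-> infixes_hit (Fs j) b r.
Proof.
move=> b0; split => [H i|H m].
  have Hm := H (i + b.-1); have := dd_le r j (i + b.-1).
  case: (leqP (dd r j (i + b.-1)) (i + b.-1)) => le _; last by lia.
  exists (i + b.-1 - dd r j (i + b.-1)); split; last exact: dd_hit.
  by apply/andP; split; lia.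
rewrite ltnNge; apply/negP => bd.
have := dd_le r j m => dm.
have [t [/andP[it tib] tF]] := H (m.+1 - b).
have tm : t <= m by lia.
have mt : m - t < dd r j m by lia.
by have := dd_nohit tm mt; rewrite tF.
Qed.

Lemma branch_run x : (forall m, x m \in Sm m) -> (forall m, parm m (x m.+1) = x m) ->
  is_run Q0 Delta w x /\ forall j m, (Cm m (x m) j : nat) = dd x j m /\ dd x j m < bs j.
Proof.
move=> xS xp; split.
  split; first by move: (xS 0); rewrite Sm0 inE => /andP[].
  move=> m; move: (xS m.+1); rewrite Sm_succ => /Snext_par [_].
  by rewrite -/(parm m (x m.+1)) xp.
move=> j; elim => [|m IH].
  move: (xS 0); rewrite Sm0 inE => /andP[_ /forallP /(_ j) lt].
  by rewrite Cm0 ffunE mkctE ifT //; lia.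
move: (xS m.+1); rewrite Sm_succ inE => /andP[_ /forallP /(_ j)].
rewrite /cnt -/(parm m (x m.+1)) xp (proj1 IH) => lt.
rewrite Cm_succ ffunE mkctE /cnt -/(parm m (x m.+1)) xp (proj1 IH) ifT /=; last by lia.
by case: ifP lt => //.
Qed.

Lemma chain m y : y \in Sm m ->
  exists f : nat -> Q, [/\ f m = y, f 0 \in Q0 & forall i, i < m -> (f i, w i, f i.+1) \in Delta].
Proof.
elim: m y => [|m IH] y.
  by rewrite Sm0 inE => /andP[yQ _]; exists (fun _ => y).
move=> yS; have yS' : y \in Snext (Sm m) (Cm m) (w m) by rewrite -Sm_succ.
have [pS tr] := Snext_par yS'.
have [f [fm f0 ft]] := IH _ pS.
exists (fun i => if i <= m then f i else y); split => //=; first by rewrite ltnn.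
move=> i im; case: (ltnP i m) => lt.
  by rewrite (ltnW lt); apply: ft.
have e : i = m by lia.
by rewrite e leqnn fm.
Qed.

Lemma run_tracked (hnc : non_confluent Q0 Delta) r : is_run Q0 Delta w r ->
  (forall j m, dd r j m < bs j) ->
  forall m, [/\ r m \in Sm m, parm m (r m.+1) = r m & forall j, (Cm m (r m) j : nat) = dd r j m].
Proof.
move=> [r0 rt] rb.
have key : forall m, r m \in Sm m -> preds (Sm m) (w m) (r m.+1) = [set r m].
  move=> m rS; apply/eqP; rewrite eqEsubset; apply/andP; split; last first.
    by rewrite sub1set /preds inE rS rt.
  apply/subsetP => p; rewrite /preds !inE => /andP[pS pt]; apply/eqP.
  have [f [fm f0 ft]] := chain pS.
  pose r' i := if i <= m then f i else r i.
  have run' : is_run Q0 Delta w r'.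
    split; first by rewrite /r' leq0n.
    move=> i; rewrite /r'; case: (ltnP i m) => lt.
      by rewrite (ltnW lt); apply: ft.
    have [e|gt] : i = m \/ m < i by lia.
      by rewrite e leqnn fm.
    by rewrite leqNgt gt /=.
  have := hnc w r' r run' (conj r0 rt) m.+1; rewrite /r' ltnn => /(_ erefl m (ltnSn m)).
  by rewrite leqnn fm.
have A : forall m, r m \in Sm m /\ forall j, (Cm m (r m) j : nat) = dd r j m.
  elim => [|m [rS IH]].
    have rS0 : r 0 \in Sm 0 by rewrite Sm0 inE r0; apply/forallP => j; exact: rb j 0.
    split => // j; rewrite Cm0 ffunE mkctE ifT //.
    by rewrite /c0; have := rb j 0; rewrite /=; case: ifP => _; lia.
  have kp1 := key m rS.
  have tp : tpar (Sm m) (w m) (r m.+1) = r m.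
    have := @preds1 (Sm m) (w m) (r m.+1); rewrite kp1 cards1 eqxx => /(_ isT).
    by rewrite inE => /eqP.
  have rS1 : r m.+1 \in Sm m.+1.
    rewrite Sm_succ inE kp1 cards1 eqxx tp /=; apply/forallP => j.
    by rewrite /cnt IH; have := rb j m.+1.
  split => // j; rewrite Cm_succ ffunE mkctE /cnt tp IH.
  have := rb j m.+1; rewrite /=; case: (r m.+1 \in Fs j) => /= lt; rewrite ?ifT //; lia.
move=> m; have [rS C] := A m; split => //.
have := @preds1 (Sm m) (w m) (r m.+1); rewrite key // cards1 eqxx => /(_ isT).
by rewrite inE => /eqP.
Qed.

Lemma accepts_iff (hb : forall j, 0 < bs j) (hnc : non_confluent Q0 Delta) :
  dpa_accepts PA w <-> exists r : nat -> Q,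
    [/\ is_run Q0 Delta w r, buchi_accepting F r & forall j : 'I_k, infixes_hit (Fs j) (bs j) r].
Proof.
have HInv : forall m, Inv (Lm m) by move=> m; case: (Lm_Inv m).
have Hcov : forall m, cover (Lm m) = Sm m by [].
split.
  move=> [p [ev [io [N HN]]]].
  have acc : exists p, ~~ odd p /\ infoften (fun m => pr F Sm parm Lm m = p) /\
      eventually (fun m => p <= pr F Sm parm Lm m).
    exists p; split => //; split.
      move=> M; have [m [Mm e]] := io M.+1.
      exists m.-1; split; first by lia.
      by rewrite -dprio_succ (_ : m.-1.+1 = m) //; lia.
    exists N => m Nm; rewrite -dprio_succ; apply: HN; lia.
  have [j [T [fr gio]]] := frozen_of_accept Hstep acc.
  have [x [xS xp xF]] := sound HInv Hcov Hstep Hpar fr gio.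
  have [run cnts] := branch_run xS xp.
  exists x; split => // j'.
  by apply/hit_iff => // m; case: (cnts j' m).
move=> [r [run acc hits]].
have rb : forall j m, dd r j m < bs j by move=> j; apply/hit_iff.
have T := run_tracked hnc run rb.
have rF : infoften (fun m => r m.+1 \in F).
  move=> M; have [m [Mm rm]] := acc M.+1; exists m.-1; split; first by lia.
  by rewrite (_ : m.-1.+1 = m) //; lia.
have [j [T0 [fr gio]]] := complete HInv Hcov Hstep (fun m => let: And3 a _ _ := T m in a)
  (fun m => let: And3 _ b _ := T m in b) rF.
have [p [ev [io [N HN]]]] := accept_of_frozen HInv fr gio.
exists p; split => //; split.
  move=> M; have [m [Mm e]] := io M; exists m.+1; split; first by lia.
  by rewrite dprio_succ.
exists N.+1 => m Nm; have e : m = m.-1.+1 by lia.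
by rewrite e dprio_succ; apply: HN; lia.
Qed.

End Main.

Unset Implicit Arguments.

Theorem mainTheorem11 (Sigma Q : finType) (Q0 : {set Q})
    (Delta : {set Q * Sigma * Q}) (F : {set Q})
    (k : nat) (Fs : 'I_k -> {set Q}) (bs : 'I_k -> nat) :
  (forall j, 0 < bs j) ->
  non_confluent Q0 Delta ->
  exists P : DPA Sigma,
    (forall w : word Sigma,
       dpa_accepts P w <->
       exists r : nat -> Q,
         [/\ is_run Q0 Delta w r, buchi_accepting F r &
             forall j : 'I_k, infixes_hit (Fs j) (bs j) r]) /\
    dpa_size P <= 2 ^ ((#|Q| + 1) ^ 2) * (\prod_(j < k) (bs j + 1)) ^ #|Q| /\
    dpa_num_priorities P <= 2 * #|Q| + 1.
Proof.
move=> hb hnc; exists (PA Q0 Delta F Fs bs); split; last split.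
- by move=> w; apply: accepts_iff.
- rewrite /dpa_size /=.
  rewrite (card_prod _ {ffun Q -> CT bs}) card_prod card_ord card_tuple card_setQ card_ffun.
  have -> : #|{: CT bs}| = \prod_(j < k) (bs j + 1).
    rewrite card_dep_ffun foldrE big_map big_enum /=; apply: eq_bigr => j _.
    by rewrite card_ord addn1.
  apply: leq_mul => //.
  rewrite -expnM (_ : (#|Q| + 1) ^ 2 = (2 * #|Q|).+1 + #|Q| * #|Q|); last first.
    rewrite -mulnn; lia.
  rewrite expnD; apply: leq_mul => //.
  by apply: ltnW; apply: ltn_expl.
- rewrite /dpa_num_priorities.
  have -> : 2 * #|Q| + 1 = size [seq i.+1 | i <- iota 0 (2 * #|Q|).+1].
    by rewrite size_map size_iota addn1.
  apply: uniq_leq_size; first exact: undup_uniq.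
  move=> x; rewrite mem_undup => /mapP[q _ ->].
  have -> : dprio q = (nat_of_ord q.1.1).+1 by [].
  by rewrite map_f // mem_iota add0n ltn_ord.
Qed.
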